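(* Let $n$ be even and consider the four-objective problem AOAZ (defined in the context). The expected running time of SEMO applied to AOAZ is bounded by $O(\frac{5}{2}n^2\log n)$.
   Context: AOAZ: $\{0,1\}^n\to\mathbb{N}^4$, $\mathrm{AOAZ}(\mathbf{x})=(f_{11}(\mathbf{x}),f_{12}(\mathbf{x}),f_{21}(\mathbf{x}),f_{22}(\mathbf{x}))$ for $\mathbf{x}=(x_1,\dots,x_n)$, $n$ even, where $f_{11}(\mathbf{x})=\sum_{i=n/2+1}^{n}x_i$, $f_{12}(\mathbf{x})=\sum_{i=1}^{n/2}x_i+\sum_{i=n/2+1}^{n}(1-x_i)$, $f_{21}(\mathbf{x})=\sum_{i=1}^{n/2}(1-x_i)+\sum_{i=n/2+1}^{n}x_i$, $f_{22}(\mathbf{x})=\sum_{i=1}^{n/2}x_i$; all four objectives are maximized, with the usual Pareto dominance ($\mathbf{z}\succ\mathbf{x}$ if $\mathbf{z}$ is at least as good in all four objectives and strictly better in one). SEMO: choose $\mathbf{x}$ uniformly from $\{0,1\}^n$, $P=\{\mathbf{x}\}$. Each iteration: pick $\mathbf{x}\in P$ uniformly at random, flip one uniformly random bit to get $\mathbf{x}'$; if there is no $\mathbf{z}\in P$ with $\mathbf{z}\succ\mathbf{x}'$ or $\mathrm{AOAZ}(\mathbf{z})=\mathrm{AOAZ}(\mathbf{x}')$, set $P\leftarrow(P\setminus\{\mathbf{z}\in P:\mathbf{x}'\succ\mathbf{z}\})\cup\{\mathbf{x}'\}$. The running time is the number of fitness evaluations (mutations) until the population covers the whole Pareto front of AOAZ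 for the first time. *)

(* Defs.v *)
From HB Require Import structures.
From mathcomp Require Import all_boot all_order all_algebra.
From mathcomp Require Import reals exp.
Set Implicit Arguments. Unset Strict Implicit. Unset Printing Implicit Defensive.
Import Order.TTheory GRing.Theory Num.Theory.

(* bit strings of length n; index i : 'I_n is the paper's x_{i+1} *)
Definition bits (n : nat) := {ffun 'I_n -> bool}.

Section AOAZ.
Variable n : nat.

Definition f11 (x : bits n) : nat := \sum_(i < n | n./2 <= i) x i.
Definition f12 (x : bits n) : nat :=
  \sum_(i < n | i < n./2) x i + \sum_(i < n | n./2 <= i) (~~ x i).
Definition f21 (x : bits n) : nat :=
  \sum_(i < n | i < n./2) (~~ x i) + \sum_(i < n | n./2 <= i) x i.
Definition f22 (x : bits n) : nat := \sum_(i < n | i < n./2) x i.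

Definition AOAZ (x : bits n) : nat * nat * nat * nat :=
  (f11 x, f12 x, f21 x, f22 x).

Definition weakly_ge (v w : nat * nat * nat * nat) : bool :=
  let: (v1, v2, v3, v4) := v in let: (w1, w2, w3, w4) := w in
  [&& w1 <= v1, w2 <= v2, w3 <= v3 & w4 <= v4].

(* Pareto dominance: at least as good everywhere and strictly better somewhere
   (equivalently, weakly better and a different objective vector) *)
Definition dominates_vec (v w : nat * nat * nat * nat) : bool :=
  weakly_ge v w && (v != w).

Definition dominates (z x : bits n) : bool := dominates_vec (AOAZ z) (AOAZ x).

Definition pareto_optimal (x : bits n) : bool := [forall z, ~~ dominates z x].

Definition covers (P : {set bits n}) : bool :=
  [forall x, pareto_optimal x ==> [exists y in P, AOAZ y == AOAZ x]].

Definition flip (x : bits n) (i : 'I_n) : bits n :=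
  [ffun j => if j == i then ~~ x j else x j].

Definition semo_update (P : {set bits n}) (x' : bits n) : {set bits n} :=
  if [exists z in P, dominates z x' || (AOAZ z == AOAZ x')] then P
  else (P :\: [set z in P | dominates x' z]) :|: [set x'].

Variable R : realType.
Local Open Scope ring_scope.

(* one-step transition probability P -> Q of SEMO: x uniform in P,
   bit i uniform in 'I_n (the populations are always nonempty; the guard
   only makes the kernel total) *)
Definition semo_trans (P Q : {set bits n}) : R :=
  if (P == set0) || (n == 0)%N then (Q == P)%:R
  else (#|P| * n)%:R^-1 *
       #|[set p : bits n * 'I_n | (p.1 \in P) && (semo_update P (flip p.1 p.2) == Q)]|%:R.

Definition semo_init (Q : {set bits n}) : R :=
  \sum_(x : bits n) (2 ^ n)%:R^-1 * (Q == [set x])%:R.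

(* alive t Q = Pr[ P_t = Q and none of P_0, ..., P_t covers the front ] *)
Fixpoint alive (t : nat) (Q : {set bits n}) : R :=
  if covers Q then 0 else
  match t with
  | 0 => semo_init Q
  | t'.+1 => \sum_(P : {set bits n}) alive t' P * semo_trans P Q
  end.

(* Pr[T > t], where T is the number of mutations until the population
   covers the whole Pareto front for the first time *)
Definition tail_prob (t : nat) : R := \sum_(Q : {set bits n}) alive t Q.

End AOAZ.

(* Main.v *)
Require Import Defs.
From HB Require Import structures.
From mathcomp Require Import all_boot all_order all_algebra.
From mathcomp Require Import reals exp.
From mathcomp Require Import zify ring lra.
Import Order.TTheory GRing.Theory Num.Theory.

Set Implicit Arguments. Unset Strict Implicit. Unset Printing Implicit Defensive.


Section Basic.
Variable n : nat.
Local Notation m := n./2.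

Lemma sum_flip_in (Pr : pred 'I_n) (x : bits n) i : Pr i ->
  \sum_(j | Pr j) (flip x i j : nat) + x i = \sum_(j | Pr j) (x j : nat) + ~~ x i.
Proof.
move=> Pi; rewrite (bigD1 i) //= [in RHS](bigD1 i) //= ffunE eqxx.
have -> : \sum_(j | Pr j && (j != i)) (flip x i j : nat) =
          \sum_(j | Pr j && (j != i)) (x j : nat).
  by apply: eq_bigr => j /andP[_ /negbTE ji]; rewrite ffunE ji.
move: (\sum_(j | Pr j && (j != i)) (x j : nat)) => S. lia.
Qed.

Lemma sum_flip_out (Pr : pred 'I_n) (x : bits n) i : ~~ Pr i ->
  \sum_(j | Pr j) (flip x i j : nat) = \sum_(j | Pr j) (x j : nat).
Proof.
move=> Pi; apply: eq_bigr => j Pj; rewrite ffunE; case: eqP => // ji.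
by move: Pi; rewrite -ji Pj.
Qed.

Lemma sum_neg (Pr : pred 'I_n) (x : bits n) :
  \sum_(j | Pr j) (~~ x j : nat) = \sum_(j | Pr j) 1 - \sum_(j | Pr j) (x j : nat).
Proof.
have -> : \sum_(j | Pr j) 1 = \sum_(j | Pr j) ((x j : nat) + (~~ x j : nat)).
  by apply: eq_bigr => j _; case: (x j).
by rewrite big_split /=; lia.
Qed.

Lemma sum_eqv (Pr : pred 'I_n) (x : bits n) v :
  \sum_(j | Pr j) ((x j == v) : nat) =
  if v then \sum_(j | Pr j) (x j : nat) else \sum_(j | Pr j) (~~ x j : nat).
Proof. by case: v; apply: eq_bigr => j _; case: (x j). Qed.

Lemma N_lo : (m <= n)%N -> \sum_(j < n | (j < m)%N) 1 = m.
Proof.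
move=> le; rewrite (big_ord_narrow le) /=.
by rewrite sum1_card card_ord.
Qed.

Lemma N_hi : (m <= n)%N -> \sum_(j < n | (m <= j)%N) 1 = n - m.
Proof.
move=> le.
have : \sum_(j < n) 1 = n by rewrite sum1_card card_ord.
rewrite (bigID (fun j : 'I_n => (j < m)%N)) /= N_lo //.
rewrite (eq_bigl (fun j : 'I_n => (m <= j)%N)); first by lia.
by move=> j /=; rewrite -leqNgt.
Qed.


Variable heven : ~~ odd n.
Lemma n2 : n = m + m.
Proof. by rewrite -{1}(odd_double_half n) (negbTE heven) add0n -addnn. Qed.
Lemma mle : (m <= n)%N. Proof. by rewrite {2}n2 leq_addr. Qed.

Definition av (x : bits n) : nat := f22 x.
Definition bv (x : bits n) : nat := f11 x.

Lemma av_le x : (av x <= m)%N.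
Proof.
rewrite /av /f22 -{2}(N_lo mle); apply: leq_sum => i _; by case: (x i).
Qed.
Lemma bv_le x : (bv x <= m)%N.
Proof.
have e : m = n - m by rewrite {2}n2 addnK.
rewrite /bv /f11 {2}e -(N_hi mle); apply: leq_sum => i _; by case: (x i).
Qed.

Lemma f12E x : f12 x = av x + (m - bv x).
Proof.
rewrite /f12 sum_neg N_hi ?mle //.
have e : n - m = m by rewrite {1}n2 addnK.
by rewrite e.
Qed.
Lemma f21E x : f21 x = (m - av x) + bv x.
Proof. by rewrite /f21 sum_neg N_lo ?mle. Qed.

Lemma AOAZ_eq y z : (AOAZ y == AOAZ z) = (av y == av z) && (bv y == bv z).
Proof.
rewrite /AOAZ f12E f21E f12E f21E !xpair_eqE -/(av y) -/(av z) -/(bv y) -/(bv z).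
have := av_le y; have := av_le z; have := bv_le y; have := bv_le z.
move=> h1 h2 h3 h4.
by apply/idP/idP => H; lia.
Qed.

Lemma dominatesE z y : dominates z y =
  [&& av y <= av z, bv y <= bv z, av z + bv y == av y + bv z & av y != av z]%N.
Proof.
rewrite /dominates /dominates_vec /AOAZ f12E f21E f12E f21E /= !xpair_eqE.
rewrite -/(av y) -/(av z) -/(bv y) -/(bv z).
have := av_le y; have := av_le z; have := bv_le y; have := bv_le z.
move=> h1 h2 h3 h4.
by apply/idP/idP => H; lia.
Qed.


Lemma flip_lo (x : bits n) (i : 'I_n) : (i < m)%N ->
  av (flip x i) + x i = av x + ~~ x i /\ bv (flip x i) = bv x.
Proof.
move=> lt; split; first by rewrite /av /f22 (sum_flip_in (Pr := fun j : 'I_n => (j < m)%N)).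
rewrite /bv /f11 (sum_flip_out (Pr := fun j : 'I_n => (m <= j)%N)) //.
by rewrite -ltnNge.
Qed.

Lemma flip_hi (x : bits n) (i : 'I_n) : (m <= i)%N ->
  bv (flip x i) + x i = bv x + ~~ x i /\ av (flip x i) = av x.
Proof.
move=> le; split; first by rewrite /bv /f11 (sum_flip_in (Pr := fun j : 'I_n => (m <= j)%N)).
rewrite /av /f22 (sum_flip_out (Pr := fun j : 'I_n => (j < m)%N)) //.
by rewrite -leqNgt.
Qed.

Definition wrel (y' y : bits n) : bool :=
  [&& av y <= av y', bv y <= bv y' & av y' + bv y == av y + bv y']%N.

Lemma keep (P : {set bits n}) (x' y : bits n) : y \in P -> exists2 y', y' \in semo_update P x' & wrel y' y.
Proof.
move=> yP; rewrite /semo_update; case: ifP => _; first by exists y => //; rewrite /wrel; lia.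
case D: (dominates x' y).
  exists x'; first by rewrite in_setU in_set1 eqxx orbT.
  by move: D; rewrite dominatesE /wrel; lia.
exists y; last by rewrite /wrel; lia.
by rewrite in_setU in_setD in_set yP D.
Qed.

Lemma accept (P : {set bits n}) (x' : bits n) : (forall z, z \in P -> ~~ wrel z x') -> x' \in semo_update P x'.
Proof.
move=> H; rewrite /semo_update; case: ifP => [/existsP[z /andP[zP /orP[D|E]]]|_].
- by move: (H z zP); move: D; rewrite dominatesE /wrel; lia.
- by move: (H z zP); move: E; rewrite AOAZ_eq /wrel; lia.
- by rewrite in_setU in_set1 eqxx orbT.
Qed.

Definition Inv (P : {set bits n}) : bool :=
  (P != set0) &&
  [forall y in P, forall z in P, (av y + bv z == av z + bv y)%N ==> (y == z)].

Lemma Inv_single (x : bits n) : Inv [set x].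
Proof.
rewrite /Inv; apply/andP; split; first by apply/set0Pn; exists x; rewrite in_set1.
apply/forall_inP => y; rewrite in_set1 => /eqP ->.
by apply/forall_inP => z; rewrite in_set1 => /eqP ->; rewrite !eqxx.
Qed.

Lemma InvP (P : {set bits n}) (y z : bits n) : Inv P -> y \in P -> z \in P -> (av y + bv z = av z + bv y)%N -> y = z.
Proof.
move=> /andP[_ /forall_inP H] yP zP e.
by have /forall_inP/(_ z zP) := H y yP; rewrite e eqxx /= => /eqP.
Qed.

Lemma Inv_upd (P : {set bits n}) (x' : bits n) : Inv P -> Inv (semo_update P x').
Proof.
move=> IP; rewrite /semo_update; case: ifP => // /negbT Hn.
have nz : forall z, z \in P -> ~~ dominates z x' && (AOAZ z != AOAZ x').
  move=> z zP; apply/negP => /negP C; move/existsP: Hn; apply; exists z.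
  by rewrite zP /=; move: C; case: (dominates z x'); case: (AOAZ z == AOAZ x').
have key : forall z, z \in P -> ~~ dominates x' z -> (av x' + bv z != av z + bv x')%N.
  move=> z zP nd; apply/negP => /eqP e; have /andP[] := nz z zP.
  rewrite dominatesE AOAZ_eq; move: nd; rewrite dominatesE.
  lia.
rewrite /Inv; apply/andP; split.
  by apply/set0Pn; exists x'; rewrite in_setU in_set1 eqxx orbT.
apply/forall_inP => y; rewrite in_setU in_setD in_set1 in_set.
case/orP => [/andP[ny yP] | /eqP ->]; apply/forall_inP => z;
  rewrite in_setU in_setD in_set1 in_set; case/orP => [/andP[nz' zP] | /eqP ->].
- apply/implyP => /eqP e; apply/eqP; exact: InvP IP yP zP e.
- rewrite yP /= in ny; apply/implyP => /eqP e; move: (key y yP ny); lia.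
- rewrite zP /= in nz'; apply/implyP => /eqP e; move: (key z zP nz'); lia.
- by rewrite !eqxx.
Qed.

Lemma Inv_card (P : {set bits n}) : Inv P -> (#|P| <= n.+1)%N.
Proof.
move=> IP.
pose f (y : bits n) : 'I_n.+1 := inord (av y + (m - bv y)).
have inj : {in P &, injective f}.
  move=> y z yP zP e0; have := congr1 (@nat_of_ord _) e0; rewrite /f !inordK; last 2 first.
  - by have := av_le z; have := bv_le z; have := n2; lia.
  - by have := av_le y; have := bv_le y; have := n2; lia.
  move=> e; apply: InvP IP yP zP _.
  by move: e; have := bv_le z; have := bv_le y; lia.
rewrite -(card_in_imset inj).
by rewrite -[X in (_ <= X)%N](card_ord n.+1) max_card.
Qed.

End Basic.


Section Drift.
Variable n : nat.
Variable heven : ~~ odd n.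
Variable R : realType.
Local Open Scope ring_scope.

Lemma trans_ge0 (P Q : {set bits n}) : 0 <= semo_trans R P Q.
Proof.
rewrite /semo_trans; case: ifP => _; first by rewrite ler0n.
by rewrite mulr_ge0 // ?invr_ge0 ler0n.
Qed.

Lemma init_ge0 (Q : {set bits n}) : 0 <= semo_init R Q.
Proof.
rewrite /semo_init; apply: sumr_ge0 => x _.
by rewrite mulr_ge0 // ?invr_ge0 ler0n.
Qed.

Lemma alive_ge0 t (Q : {set bits n}) : 0 <= alive R t Q.
Proof.
elim: t Q => [|t IH] Q /=; case: ifP => _ //; first exact: init_ge0.
by apply: sumr_ge0 => P _; rewrite mulr_ge0 ?IH ?trans_ge0.
Qed.

Lemma alive_cov t (Q : {set bits n}) : covers Q -> alive R t Q = 0.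
Proof. by case: t => [|t] /= ->. Qed.

Lemma alive_Inv t (Q : {set bits n}) : ~~ Inv Q -> alive R t Q = 0.
Proof.
elim: t Q => [|t IH] Q nI /=; case: ifP => _ //.
  rewrite /semo_init big1 // => x _.
  case: eqP => [E|_]; last by rewrite /= mulr0.
  by move: nI; rewrite E Inv_single.
rewrite big1 // => P _.
case IP: (Inv P); last by rewrite IH ?IP // mul0r.
rewrite /semo_trans; case: ifP => [/orP[]|/norP[P0 n0]].
- by move: IP => /andP[/negbTE ->].
- move=> _; case: (Q =P P) => [E|_]; last by rewrite mulr0.
  by move: nI; rewrite E IP.
suff -> : #|[set p : bits n * 'I_n | (p.1 \in P) && (semo_update P (flip p.1 p.2) == Q)]| = 0%N.
  by rewrite mulr0 mulr0.
apply/eqP; rewrite cards_eq0; apply/eqP/setP => p; rewrite in_set in_set0.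
apply/negP => /andP[_ /eqP E].
by move: nI; rewrite -E Inv_upd.
Qed.

Lemma trans_sum (P : {set bits n}) (g : {set bits n} -> R) :
  P != set0 -> n != 0%N ->
  \sum_Q semo_trans R P Q * g Q =
  (#|P| * n)%:R^-1 * \sum_(x in P) \sum_(i < n) g (semo_update P (flip x i)).
Proof.
move=> P0 n0; rewrite /semo_trans (negbTE P0) (negbTE n0) /=.
under eq_bigr do rewrite -mulrA.
rewrite -mulr_sumr; congr (_ * _).
rewrite pair_big_dep /=.
rewrite (partition_big (fun p : bits n * 'I_n => semo_update P (flip p.1 p.2)) predT) //=.
apply: eq_bigr => Q _.
rewrite (eq_bigr (fun _ => g Q)); last by move=> p /andP[_ /eqP ->].
rewrite sumr_const -[RHS]mulr_natl; congr (_ * _); congr (_%:R).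
by apply: eq_card => p; rewrite !inE unfold_in /= andbT.
Qed.

Lemma drift_bound (g : {set bits n} -> R) (B : R) :
  (forall Q, 0 <= g Q) ->
  (forall P, Inv P -> ~~ covers P -> \sum_Q semo_trans R P Q * g Q <= g P - 1) ->
  (forall x, g [set x] <= B) ->
  forall N, \sum_(t < N) tail_prob n R t <= B.
Proof.
move=> g0 Hd HB.
pose A t := \sum_Q alive R t Q * g Q.
have step : forall t, A t.+1 + tail_prob n R t <= A t.
  move=> t.
  have h1 : A t.+1 <= \sum_P alive R t P * \sum_Q semo_trans R P Q * g Q.
    rewrite /A.
    under [X in _ <= X]eq_bigr do rewrite mulr_sumr.
    rewrite [X in _ <= X]exchange_big /=.
    apply: ler_sum => Q _ /=; case: ifP => _.
      by rewrite mul0r; apply: sumr_ge0 => P _; rewrite mulrA mulr_ge0 ?mulr_ge0 ?alive_ge0 ?trans_ge0.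
    by rewrite mulr_suml; apply: ler_sum => P _; rewrite mulrA.
  have h2 : \sum_P alive R t P * \sum_Q semo_trans R P Q * g Q <=
            \sum_P alive R t P * (g P - 1).
    apply: ler_sum => P _.
    case IP: (Inv P); last by rewrite alive_Inv ?IP // !mul0r.
    case CP: (covers P); first by rewrite alive_cov // !mul0r.
    by rewrite ler_wpM2l ?alive_ge0 // Hd ?CP.
  have e : \sum_P alive R t P * (g P - 1) = A t - tail_prob n R t.
    rewrite /A /tail_prob -sumrB; apply: eq_bigr => P _; by rewrite mulrBr mulr1.
  by move: (le_trans h1 h2); rewrite e lerBrDr.
have A0 : A 0%N <= B.
  rewrite /A /=.
  apply: (@le_trans _ _ (\sum_Q semo_init R Q * g Q)).
    by apply: ler_sum => Q _; case: ifP => _; rewrite ?mul0r ?mulr_ge0 ?init_ge0.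
  rewrite /semo_init.
  under eq_bigr do rewrite mulr_suml.
  rewrite exchange_big /=.
  apply: (@le_trans _ _ (\sum_(x : bits n) (2 ^ n)%:R^-1 * B)).
    apply: ler_sum => x _.
    rewrite (bigD1 [set x]) //= eqxx mulr1 big1 ?addr0; last first.
      by move=> Q /negbTE ->; rewrite mulr0 mul0r.
    by rewrite ler_wpM2l // invr_ge0 ler0n.
  rewrite sumr_const card_ffun card_bool card_ord -[X in X <= _]mulr_natl mulrA mulfV ?mul1r //.
  by rewrite pnatr_eq0 expn_eq0.
have AN : forall N, \sum_(t < N) tail_prob n R t + A N <= A 0%N.
  elim=> [|N IH]; first by rewrite big_ord0 add0r.
  rewrite big_ord_recr /=; apply: le_trans IH.
  by rewrite -addrA lerD2l addrC step.
move=> N; apply: le_trans A0; apply: le_trans (AN N).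
rewrite lerDl /A; apply: sumr_ge0 => Q _; by rewrite mulr_ge0 ?alive_ge0.
Qed.

End Drift.


Section DriftFrom.
Variable n : nat.
Variable heven : ~~ odd n.
Variable R : realType.
Local Open Scope ring_scope.

Lemma drift_from (g : {set bits n} -> R) (P : {set bits n}) (x0 : bits n) (c : pred 'I_n) :
  Inv P -> (0 < n)%N -> x0 \in P -> (0 < \sum_i (c i : nat))%N ->
  (forall x i, x \in P -> g (semo_update P (flip x i)) <= g P) ->
  (forall i, c i -> g (semo_update P (flip x0 i)) +
       (n * n.+1)%:R / (\sum_i (c i : nat))%:R <= g P) ->
  \sum_Q semo_trans R P Q * g Q <= g P - 1.
Proof.
move=> IP n0 x0P c0 mono dec.
have P0 : P != set0 by case/andP: IP.
rewrite trans_sum //; last by rewrite -lt0n.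
set K : R := (n * n.+1)%:R.
set Kc : R := (\sum_i (c i : nat))%:R.
have Kc0 : 0 < Kc by rewrite ltr0n.
have hT : forall x, x \in P ->
    \sum_(i < n) g (semo_update P (flip x i)) <= n%:R * g P - (x == x0)%:R * K.
  move=> x xP; case: eqP => [->|_]; last first.
    rewrite mul0r subr0; apply: (@le_trans _ _ (\sum_(i < n) g P)).
      by apply: ler_sum => i _; apply: mono.
    by rewrite sumr_const card_ord mulr_natl.
  apply: (@le_trans _ _ (\sum_(i < n) (g P - (c i : nat)%:R * (K / Kc)))).
    apply: ler_sum => i _; case ci: (c i) => /=.
      by rewrite mul1r lerBrDr dec.
    by rewrite mul0r subr0 mono.
  rewrite sumrB sumr_const card_ord mulr_natl -mulr_suml -natr_sum -/Kc.
  by rewrite mulrCA mulfV ?mulr1 ?mul1r // (gt_eqF Kc0).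
rewrite ler_pdivrMl; last by rewrite ltr0n muln_gt0 n0 andbT card_gt0.
apply: (@le_trans _ _ (\sum_(x in P) (n%:R * g P - (x == x0)%:R * K))).
  by apply: ler_sum => x xP; apply: hT.
rewrite sumrB sumr_const (bigD1 x0) //= eqxx mul1r big1 ?addr0; last first.
  by move=> x /andP[_ /negbTE ->]; rewrite mul0r.
have hc := Inv_card heven IP.
have : (#|P| * n <= n * n.+1)%N by rewrite mulnC leq_mul2l hc orbT.
rewrite -(ler_nat R) -/K natrM => hK.
have e : forall x : R, x *+ #|P| = #|P|%:R * x by move=> x; rewrite mulr_natl.
rewrite e. nra.
Qed.

End DriftFrom.


Section Pot.
Variable n : nat.
Variable heven : ~~ odd n.
Variable R : realType.
Local Notation m := n./2.

Definition Mx (P : {set bits n}) : nat := \max_(y in P) maxn (av y) (bv y).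
Definition pos (j : nat) : nat * nat := if (j <= m)%N then (j, m) else (m, n - j).
Definition covpos (P : {set bits n}) (j : nat) : bool :=
  [exists y in P, (av y == (pos j).1) && (bv y == (pos j).2)].
Definition Lc (j : nat) : nat := if (j <= m)%N then (m - j).+1 else (n - j).+1.
Definition Rcn (j : nat) : nat := if (j < m)%N then j.+1 else (j.+1 - m)%N.
Local Open Scope ring_scope.
Definition Hs (k : nat) : R := \sum_(i < k) (i.+1%:R)^-1.
Definition KK : R := (n * n.+1)%:R.
Definition w (j : nat) : R := KK * ((Lc j)%:R^-1 + (Rcn j)%:R^-1).
Definition g1 (P : {set bits n}) : R := KK * Hs (m - Mx P).
Definition g2 (P : {set bits n}) : R := \sum_(j < n.+1 | ~~ covpos P j) w j.
Definition gg (P : {set bits n}) : R := g1 P + g2 P.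

Lemma HsS k : Hs k.+1 = Hs k + (k.+1%:R)^-1.
Proof. by rewrite /Hs big_ord_recr. Qed.

Lemma Hs_ge0 k : 0 <= Hs k.
Proof. by apply: sumr_ge0 => i _; rewrite invr_ge0 ler0n. Qed.

Lemma Hs_mono k1 k2 : (k1 <= k2)%N -> Hs k1 <= Hs k2.
Proof.
move=> /subnK <-; elim: (k2 - k1)%N => [|d IH]; first by rewrite add0n.
by rewrite addSn HsS (le_trans IH) // lerDl invr_ge0 ler0n.
Qed.

Lemma Hs_step k k' : (k' < k)%N -> Hs k' + (k%:R)^-1 <= Hs k.
Proof.
case: k => // k lt; rewrite HsS lerD2r; apply: Hs_mono; by rewrite -ltnS.
Qed.

Lemma KK_ge0 : 0 <= KK. Proof. exact: ler0n. Qed.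

Lemma w_ge0 j : 0 <= w j.
Proof. by rewrite mulr_ge0 ?KK_ge0 // addr_ge0 // invr_ge0 ler0n. Qed.

Lemma g2_ge0 P : 0 <= g2 P.
Proof. by apply: sumr_ge0 => j _; apply: w_ge0. Qed.

Lemma gg_ge0 P : 0 <= gg P.
Proof. by rewrite addr_ge0 ?g2_ge0 // mulr_ge0 ?KK_ge0 ?Hs_ge0. Qed.

Lemma Mx_le P : (Mx P <= m)%N.
Proof.
apply/bigmax_leqP => y _; rewrite geq_max av_le ?bv_le //.
Qed.

Lemma Mx_mono P x' : (Mx P <= Mx (semo_update P x'))%N.
Proof.
apply/bigmax_leqP => y yP.
have [y' y'U r] := keep heven x' yP.
apply: leq_trans (leq_bigmax_cond y' y'U).
by move: r; rewrite /wrel; lia.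
Qed.

Lemma covpos_mono P x' j : covpos P j -> covpos (semo_update P x') j.
Proof.
case/existsP => y /andP[yP /andP[/eqP ha /eqP hb]].
have [y' y'U r] := keep heven x' yP.
apply/existsP; exists y'; rewrite y'U /=.
have := av_le heven y'; have := bv_le heven y'; have := n2 heven.
move: r ha hb; rewrite /wrel /pos; case: ifP => _ /= r ha hb; lia.
Qed.

Lemma g2_mono P x' : g2 (semo_update P x') <= g2 P.
Proof.
rewrite /g2 [X in X <= _]big_mkcond [X in _ <= X]big_mkcond /=.
apply: ler_sum => j _.
case: (boolP (covpos P j)) => c /=.
  by rewrite (covpos_mono x' c) /=.
by case: ifP => _ //; apply: w_ge0.
Qed.

Lemma g1_mono P x' : g1 (semo_update P x') <= g1 P.
Proof.
rewrite /g1 ler_wpM2l ?KK_ge0 //; apply: Hs_mono.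
by have := Mx_mono P x'; lia.
Qed.

Lemma gg_mono P x' : gg (semo_update P x') <= gg P.
Proof. by rewrite lerD ?g1_mono ?g2_mono. Qed.

End Pot.


Section Counting.
Variable n : nat.
Variable heven : ~~ odd n.
Local Notation m := n./2.

Lemma cnt_gen (a : pred 'I_n) (b : pred 'I_n) :
  \sum_(i < n) ((a i && b i) : nat) = \sum_(i | a i) (b i : nat).
Proof. by rewrite [RHS]big_mkcond /=; apply: eq_bigr => i _; case: (a i). Qed.

Lemma cnt_lo1 (x : bits n) : \sum_(i < n) (((i < m) && x i) : nat) = av x.
Proof. by rewrite cnt_gen. Qed.
Lemma cnt_lo0 (x : bits n) : \sum_(i < n) (((i < m) && ~~ x i) : nat) = m - av x.
Proof. by rewrite cnt_gen sum_neg N_lo ?mle. Qed.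
Lemma cnt_hi1 (x : bits n) : \sum_(i < n) (((m <= i) && x i) : nat) = bv x.
Proof. by rewrite cnt_gen. Qed.
Lemma cnt_hi0 (x : bits n) : \sum_(i < n) (((m <= i) && ~~ x i) : nat) = m - bv x.
Proof.
rewrite cnt_gen sum_neg N_hi ?mle //.
have e : n - m = m by rewrite {1}(n2 heven) addnK.
by rewrite e.
Qed.

Lemma cnt_ex (c : pred 'I_n) : 0 < \sum_i (c i : nat) -> exists i, c i.
Proof.
case: (boolP [exists i, c i]) => [/existsP[i ci]|/existsPn H]; first by exists i.
by rewrite big1 // => i _; rewrite (negbTE (H i)).
Qed.

Lemma adj (f : nat -> bool) j1 j2 : j1 <= n -> j2 <= n -> f j1 -> ~~ f j2 ->
  exists j, j < n /\ f j != f j.+1.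
Proof.
move=> h1 h2 f1 f2.
case: (boolP [exists j : 'I_n, f j != f j.+1]) => [/existsP[j Hj]|/existsPn H].
  by exists j; split.
have C : forall k, k <= n -> f k = f 0.
  elim=> // k IH lt; rewrite -IH ?(ltnW lt) //.
  by have := H (Ordinal lt); rewrite negbK => /eqP.
by move: f2; rewrite C // -(C j1) // f1.
Qed.

Lemma front_pos (x : bits n) : av x = m \/ bv x = m ->
  exists j, j <= n /\ pos n j = (av x, bv x).
Proof.
have := av_le heven x; have := bv_le heven x; have := n2 heven => e h1 h2.
case=> h.
  exists (n - bv x); split; first lia.
  rewrite /pos; case: ifP => c; last by rewrite h; congr pair; lia.
  rewrite h; congr pair; lia.
exists (av x); split; first lia.
by rewrite /pos; case: ifP => c; [rewrite h | lia].
Qed.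

Lemma pareto_front (x : bits n) : pareto_optimal x -> av x = m \/ bv x = m.
Proof.
move=> po; have := av_le heven x; have := bv_le heven x => h1 h2.
case: (ltnP (av x) m) => ha; last by left; lia.
case: (ltnP (bv x) m) => hb; last by right; lia.
have [i /andP[im xi]] : exists i : 'I_n, (i < m) && ~~ x i.
  by apply: cnt_ex; rewrite cnt_lo0; lia.
set x1 := flip x i.
have [fa fb] := flip_lo x im.
have [i' /andP[im' xi']] : exists i : 'I_n, (m <= i) && ~~ x1 i.
  by apply: cnt_ex; rewrite cnt_hi0 -/x1 fb; lia.
have [fa' fb'] := flip_hi x1 im'.
move/forallP: po => /(_ (flip x1 i')); rewrite dominatesE //.
move: fa fb fa' fb'; rewrite -/x1 (negbTE xi) (negbTE xi') /=.
lia.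
Qed.

Lemma not_covers (P : {set bits n}) : ~~ covers P -> exists j, j <= n /\ ~~ covpos P j.
Proof.
case/forallPn => x; rewrite negb_imply => /andP[po /existsPn H].
have [j [jn pj]] := front_pos (pareto_front po).
exists j; split => //; apply/existsP => -[y /andP[yP]].
rewrite pj /= => eab; move: (H y); rewrite yP AOAZ_eq //=.
by case/andP: eab => -> ->.
Qed.

End Counting.


Section Main.
Variable n : nat.
Variable heven : ~~ odd n.
Variable R : realType.
Local Notation m := n./2.
Local Open Scope ring_scope.

Local Notation gg := (@gg n R).

Lemma g1_dec (P P' : {set bits n}) : (Mx P < Mx P')%N ->
  g1 R P' + KK n R / (m - Mx P)%:R <= g1 R P.
Proof.
move=> lt; rewrite /g1 -mulrDr ler_wpM2l ?KK_ge0 //; apply: Hs_step.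
by have := Mx_le heven P'; lia.
Qed.

Lemma phase1 (P : {set bits n}) : Inv P -> (0 < n)%N -> (Mx P < m)%N ->
  \sum_Q semo_trans R P Q * gg Q <= gg P - 1.
Proof.
move=> IP n0 lt.
have P0 : P != set0 by case/andP: IP.
have hP : (0 < #|P|)%N by rewrite card_gt0.
have [x0 x0P hx0] := eq_bigmax_cond (fun y => maxn (av y) (bv y)) hP.
rewrite -/(Mx P) in hx0.
have Mmax : forall z, z \in P -> (maxn (av z) (bv z) <= Mx P)%N.
  by move=> z zP; apply: (leq_bigmax_cond z zP).
case: (leqP (bv x0) (av x0)) => hab.
- apply: (@drift_from n heven R gg P x0 (fun i : 'I_n => (i < m)%N && ~~ x0 i)) => //.
  + by rewrite cnt_lo0 //; lia.
  + by move=> x i _; apply: gg_mono.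
  move=> i /andP[im xi].
  have [fa fb] := flip_lo x0 im; rewrite (negbTE xi) /= in fa.
  have x'U : flip x0 i \in semo_update P (flip x0 i).
    apply: accept => // z zP; apply/negP; rewrite /wrel => r.
    by have := Mmax z zP; lia.
  have lt' : (Mx P < Mx (semo_update P (flip x0 i)))%N.
    by have := leq_bigmax_cond (F := fun y => maxn (av y) (bv y)) _ x'U; rewrite -/(Mx _); lia.
  rewrite cnt_lo0 // (_ : (m - av x0 = m - Mx P)%N); last by lia.
  rewrite /gg addrAC lerD ?g2_mono //; exact: g1_dec.
- apply: (@drift_from n heven R gg P x0 (fun i : 'I_n => (m <= i)%N && ~~ x0 i)) => //.
  + by rewrite cnt_hi0 //; lia.
  + by move=> x i _; apply: gg_mono.
  move=> i /andP[im xi].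
  have [fb fa] := flip_hi x0 im; rewrite (negbTE xi) /= in fb.
  have x'U : flip x0 i \in semo_update P (flip x0 i).
    apply: accept => // z zP; apply/negP; rewrite /wrel => r.
    by have := Mmax z zP; lia.
  have lt' : (Mx P < Mx (semo_update P (flip x0 i)))%N.
    by have := leq_bigmax_cond (F := fun y => maxn (av y) (bv y)) _ x'U; rewrite -/(Mx _); lia.
  rewrite cnt_hi0 // (_ : (m - bv x0 = m - Mx P)%N); last by lia.
  rewrite /gg addrAC lerD ?g2_mono //; exact: g1_dec.
Qed.


Lemma covpos_in (P : {set bits n}) y j : y \in P -> (av y, bv y) = pos n j -> covpos P j.
Proof.
move=> yP e; apply/existsP; exists y; rewrite yP -e /=.
by rewrite !eqxx.
Qed.

Lemma pos_front j : (j <= n)%N -> ((pos n j).1 = m \/ (pos n j).2 = m) /\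
   ((pos n j).1 <= m)%N /\ ((pos n j).2 <= m)%N.
Proof.
have := n2 heven => e jn; rewrite /pos; case: ifP => h /=; lia.
Qed.

Lemma phase2_case (P : {set bits n}) (y : bits n) j' (c : pred 'I_n) :
  Inv P -> (0 < n)%N -> Mx P = m -> y \in P -> (j' <= n)%N -> ~~ covpos P j' ->
  (forall i, c i -> (av (flip y i), bv (flip y i)) = pos n j') ->
  (\sum_(i < n) (c i : nat) = Lc n j' \/ \sum_(i < n) (c i : nat) = Rcn n j') ->
  (0 < \sum_(i < n) (c i : nat))%N ->
  \sum_Q semo_trans R P Q * gg Q <= gg P - 1.
Proof.
move=> IP n0 hM yP jn nc fl hs s0.
apply: (@drift_from n heven R gg P y c) => //.
  by move=> x i _; apply: gg_mono.
move=> i ci; set x' := flip y i.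
have [pf [pa pb]] := pos_front jn.
have x'U : x' \in semo_update P x'.
  apply: accept => // z zP; apply/negP; rewrite /wrel => r.
  have := av_le heven z; have := bv_le heven z => h1 h2.
  move/negP: nc; apply; apply: (covpos_in zP); rewrite -(fl i ci) -/x'.
  move: pf pa pb; rewrite -(fl i ci) -/x' /= => pf pa pb.
  by congr pair; lia.
have cU : covpos (semo_update P x') j' by apply: (covpos_in x'U); rewrite fl.
rewrite /gg -addrA lerD ?g1_mono //.
set s := \sum_(i < n) (c i : nat).
have jo : (j' < n.+1)%N by [].
rewrite /g2 [X in _ <= X](bigD1 (Ordinal jo)) //= addrC lerD //.
- rewrite /w ler_wpM2l ?KK_ge0 //.
  rewrite /s; case: hs => -> ; first by rewrite lerDl invr_ge0 ler0n.
  by rewrite lerDr invr_ge0 ler0n.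
- rewrite [X in X <= _]big_mkcond [X in _ <= X]big_mkcond /=.
  apply: ler_sum => j _.
  case: (boolP (covpos (semo_update P x') j)) => cj /=.
    by case: ifP => _ //; apply: w_ge0.
  have -> : ~~ covpos P j by apply: contra cj; apply: covpos_mono.
  case: eqP => [E|_] //=.
  by move: cj; rewrite E /= cU.
Qed.


Lemma covpos_get (P : {set bits n}) j : covpos P j ->
  exists2 y, y \in P & (av y, bv y) = pos n j.
Proof.
case/existsP => y /andP[yP /andP[/eqP ha /eqP hb]]; exists y => //.
by rewrite ha hb; case: (pos n j).
Qed.

Lemma pos_lt j : (j < m)%N -> pos n j = (j, m).
Proof. by move=> h; rewrite /pos ifT //; apply: ltnW. Qed.
Lemma pos_ge j : (m <= j)%N -> pos n j = (m, (n - j)%N).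
Proof.
move=> h; rewrite /pos; case: ifP => h' //.
have := n2 heven => e; congr pair; lia.
Qed.

Lemma phase2 (P : {set bits n}) : Inv P -> (0 < n)%N -> Mx P = m -> ~~ covers P ->
  \sum_Q semo_trans R P Q * gg Q <= gg P - 1.
Proof.
move=> IP n0 hM nc.
have := n2 heven => e.
have P0 : P != set0 by case/andP: IP.
have hP : (0 < #|P|)%N by rewrite card_gt0.
have [x0 x0P hx0] := eq_bigmax_cond (fun y => maxn (av y) (bv y)) hP.
rewrite -/(Mx P) hM in hx0.
have [j1 [j1n pj1]] : exists j, (j <= n)%N /\ pos n j = (av x0, bv x0).
  apply: front_pos => //; have := av_le heven x0; have := bv_le heven x0; lia.
have [j0 [j0n nc0]] := not_covers heven nc.
have c1 : covpos P j1 by apply: (covpos_in x0P).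
have [j [jn dj]] := adj j1n j0n c1 nc0.
clear x0P hx0 pj1 j1n c1 nc0 j0n hP P0 nc.
case: (boolP (covpos P j)) => cj.
- have ncj : ~~ covpos P j.+1 by move: dj; rewrite cj; case: (covpos P j.+1).
  have [y yP py] := covpos_get cj.
  case: (ltnP j m) => hj.
  + rewrite pos_lt // in py; case: py => ha hb.
    apply: (@phase2_case P y j.+1 (fun i : 'I_n => (i < m)%N && ~~ y i)) => //.
    * move=> i /andP[im yi]; have [fa fb] := flip_lo y im.
      rewrite (negbTE yi) /= in fa; rewrite /pos ifT //.
      by apply/eqP; rewrite xpair_eqE; lia.
    * by left; rewrite cnt_lo0 // /Lc ifT; lia.
    * by rewrite cnt_lo0 //; lia.
  + rewrite pos_ge // in py; case: py => ha hb.
    apply: (@phase2_case P y j.+1 (fun i : 'I_n => (m <= i)%N && y i)) => //.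
    * move=> i /andP[im yi]; have [fb fa] := flip_hi y im.
      rewrite yi /= in fb; rewrite pos_ge; last by lia.
      by apply/eqP; rewrite xpair_eqE; lia.
    * by left; rewrite cnt_hi1 // /Lc ifF; lia.
    * by rewrite cnt_hi1 //; lia.
- have cj1 : covpos P j.+1 by move: dj; rewrite (negbTE cj); case: (covpos P j.+1).
  have [y yP py] := covpos_get cj1.
  case: (ltnP j m) => hj.
  + rewrite /pos ifT // in py; case: py => ha hb.
    apply: (@phase2_case P y j (fun i : 'I_n => (i < m)%N && y i)) => //; first by lia.
    * move=> i /andP[im yi]; have [fa fb] := flip_lo y im.
      rewrite yi /= in fa; rewrite pos_lt //.
      by apply/eqP; rewrite xpair_eqE; lia.
    * by right; rewrite cnt_lo1 // /Rcn ifT; lia.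
    * by rewrite cnt_lo1 //; lia.
  + rewrite pos_ge in py; last by lia.
    case: py => ha hb.
    apply: (@phase2_case P y j (fun i : 'I_n => (m <= i)%N && ~~ y i)) => //; first by lia.
    * move=> i /andP[im yi]; have [fb fa] := flip_hi y im.
      rewrite (negbTE yi) /= in fb; rewrite pos_ge //.
      by apply/eqP; rewrite xpair_eqE; lia.
    * by right; rewrite cnt_hi0 // /Rcn ifF; lia.
    * by rewrite cnt_hi0 //; lia.
Qed.

Lemma gg_drift (P : {set bits n}) : (0 < n)%N -> Inv P -> ~~ covers P ->
  \sum_Q semo_trans R P Q * gg Q <= gg P - 1.
Proof.
move=> n0 IP nc; case: (ltnP (Mx P) m) => h; first exact: phase1.
apply: phase2 => //; have := Mx_le heven P; lia.
Qed.

End Main.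


Section Bounds.
Variable R : realType.
Local Open Scope ring_scope.

Definition hh (k : nat) : R := (k.+1%:R)^-1.

Lemma hh_ge0 k : 0 <= hh k. Proof. by rewrite invr_ge0 ler0n. Qed.

Lemma Hs_nat k : Hs R k = \sum_(0 <= i < k) hh i.
Proof. by rewrite big_mkord. Qed.

Lemma rev_sum k (f : nat -> R) :
  \sum_(0 <= j < k) f (k - j.+1)%N = \sum_(0 <= j < k) f j.
Proof. by rewrite [RHS]big_nat_rev add0n. Qed.

Lemma Hs_ln k : Hs R k.+1 <= 1 + ln (k.+1%:R : R).
Proof.
elim: k => [|k IH].
  by rewrite /Hs big_ord_recr big_ord0 /= add0r ln1 addr0 invr1.
rewrite HsS; apply: (le_trans (lerD IH (lexx _))).
rewrite -addrA lerD2l.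
have hk : (0 : R) < k.+2%:R by rewrite ltr0n.
have hk1 : (0 : R) < k.+1%:R by rewrite ltr0n.
have := @le_ln1Dx R (- (k.+2%:R)^-1).
rewrite ltrNl opprK invf_lt1 ?ltr1n // => /(_ isT).
have -> : 1 - (k.+2%:R : R)^-1 = k.+1%:R / k.+2%:R.
  rewrite -[k.+2]addn1 natrD; field; apply/negP => /eqP; have := ler0n R k; lra.
rewrite ln_div ?posrE ?ltr0n //. move: (ln _) (ln _) ((_ : R)^-1) => a b c. lra.
Qed.


Lemma hh_anti a b : (a <= b)%N -> hh b <= hh a.
Proof.
move=> ab; rewrite /hh lef_pV2 ?posrE ?ltr0n // ler_nat; lia.
Qed.

Lemma sumw_bound n : ~~ odd n ->
  \sum_(j < n.+1) (((Lc n j)%:R : R)^-1 + ((Rcn n j)%:R)^-1) <= 5%:R * Hs R (n./2).+1.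
Proof.
move=> hev; have e := n2 hev; set m := n./2 in e *.
rewrite -(big_mkord xpredT (fun j => ((Lc n j)%:R : R)^-1 + ((Rcn n j)%:R)^-1)) (big_cat_nat _ (n := m.+1)) //=; last by lia.
have h1 : \sum_(0 <= j < m.+1) (((Lc n j)%:R : R)^-1 + ((Rcn n j)%:R)^-1) <=
          3%:R * Hs R m.+1.
  apply: (@le_trans _ _ (\sum_(0 <= j < m.+1) (2%:R * hh (m.+1 - j.+1) + hh j))).
    apply: ler_sum_nat => j /andP[_ jm].
    have hL : ((Lc n j)%:R : R)^-1 = hh (m.+1 - j.+1).
      by rewrite /hh /Lc ifT; [congr (_%:R^-1); lia | lia].
    rewrite hL /Rcn; case: ifP => hj.
      by rewrite /hh -/(hh _) lerD2r ler_peMl ?hh_ge0 // ler1n.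
    have -> : ((j.+1 - m)%N%:R : R)^-1 = hh (m.+1 - j.+1).
      by rewrite /hh; congr (_%:R^-1); lia.
    have := hh_ge0 j; have := hh_ge0 (m.+1 - j.+1); lra.
  rewrite big_split /= -mulr_sumr rev_sum Hs_nat; lra.
have h2 : \sum_(m.+1 <= j < n.+1) (((Lc n j)%:R : R)^-1 + ((Rcn n j)%:R)^-1) <=
          2%:R * Hs R m.
  have -> : \sum_(m.+1 <= j < n.+1) (((Lc n j)%:R : R)^-1 + ((Rcn n j)%:R)^-1) =
            \sum_(0 <= k < m) (((Lc n (k + m.+1))%:R : R)^-1 + ((Rcn n (k + m.+1))%:R)^-1).
    rewrite -{1}(add0n m.+1) big_addn.
    by have -> : (n.+1 - m.+1 = m)%N by lia.
  apply: (@le_trans _ _ (\sum_(0 <= k < m) (hh (m - k.+1) + hh k))).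
    apply: ler_sum_nat => k /andP[_ km].
    rewrite /Lc /Rcn ifF; last by lia.
    rewrite ifF; last by lia.
    apply: lerD.
      by rewrite /hh (_ : ((n - (k + m.+1)).+1 = (m - k.+1).+1)%N) //; lia.
    rewrite -/m (_ : ((k + m.+1).+1 - m = k.+2)%N); last by lia.
    by apply: (hh_anti (leqnSn k)).
  rewrite big_split /= rev_sum Hs_nat; lra.
have h3 : Hs R m <= Hs R m.+1 by apply: Hs_mono.
lra.
Qed.

End Bounds.

Unset Implicit Arguments.
Local Open Scope ring_scope.

Lemma init_bound (R : realType) n (hev : ~~ odd n) (x : bits n) :
  gg R [set x] <= KK n R * (6%:R * Hs R (n./2).+1).
Proof.
rewrite /gg /g1 /g2.
have h1 : Hs R (n./2 - Mx [set x]) <= Hs R (n./2).+1 by apply: Hs_mono; lia.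
have h2 : \sum_(j < n.+1 | ~~ covpos [set x] j) w n R j <= \sum_(j < n.+1) w n R j.
  rewrite [X in X <= _]big_mkcond; apply: ler_sum => j _.
  by case: ifP => _ //; apply: w_ge0.
have h3 : \sum_(j < n.+1) w n R j =
   KK n R * \sum_(j < n.+1) (((Lc n j)%:R : R)^-1 + ((Rcn n j)%:R)^-1).
  by rewrite mulr_sumr.
have h4 := sumw_bound R hev.
have h5 := KK_ge0 n R.
have h6 := Hs_ge0 R (n./2).+1.
nra.
Qed.

Theorem theorem4 (R : realType) :
  exists (C : R) (N0 : nat),
    forall n : nat, ~~ odd n -> (N0 <= n)%N ->
      forall N : nat,
        \sum_(t < N) tail_prob n R t
          <= C * ((5%:R / 2%:R) * (n%:R ^+ 2) * ln (n%:R : R)).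
Proof.
exists (5%:R * (1 + (ln (2%:R : R))^-1)), 2%N => n hev n2 N.
have n0 : (0 < n)%N by lia.
apply: (drift_bound hev (g := gg R)).
- exact: gg_ge0.
- by move=> P IP nc; apply: gg_drift.
move=> x; apply: (le_trans (@init_bound R n hev x)).
have hl2 : 0 < ln (2%:R : R) by rewrite ln_gt0 // ltr1n.
have hL : ln (2%:R : R) <= ln (n%:R : R).
  by rewrite ler_ln ?posrE ?ltr0n ?ler_nat //; lia.
have hH : Hs R (n./2).+1 <= 1 + ln (n%:R : R).
  apply: (le_trans (Hs_ln R (n./2))); rewrite lerD2l.
  by rewrite ler_ln ?posrE ?ltr0n ?ler_nat //; lia.
set L := ln (n%:R : R) in hL hH *.
set l2 := ln (2%:R : R) in hl2 hL *.
have hi : l2 * l2^-1 = 1 by rewrite mulfV // gt_eqF.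
have hi0 : 0 < l2^-1 by rewrite invr_gt0.
have h1 : 1 <= L * l2^-1 by rewrite -hi ler_wpM2r // ltW.
set i2 := l2^-1 in hi hi0 h1 *.
have hx : (2%:R : R) <= n%:R by rewrite ler_nat.
have hK : KK n R = n%:R * (n%:R + 1) by rewrite /KK natrM -addn1 natrD.
rewrite hK.
set xx : R := n%:R in hx hK *.
have hHs := Hs_ge0 R (n./2).+1.
set H := Hs R (n./2).+1 in hH hHs *.
have hT : H <= L * (1 + i2) by nra.
have hxx : xx * (xx + 1) <= 2%:R * xx ^+ 2 by rewrite expr2; nra.
have hL0 : 0 <= L by lra.
have hprod : xx * (xx + 1) * (6%:R * H) <= 2%:R * xx ^+ 2 * (6%:R * (L * (1 + i2))).
  apply: ler_pM => //.
  - by apply: mulr_ge0; lra.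
  - by apply: mulr_ge0; lra.
  - by rewrite ler_pM2l //; lra.
apply: (le_trans hprod).
have : 0 <= xx ^+ 2 * (L * (1 + i2)) by rewrite mulr_ge0 ?exprn_ge0 ?mulr_ge0 //; lra.
move: (xx ^+ 2 * (L * (1 + i2))) => Z.
nra.
Qed.
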